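(* Let $\mathbf{k}$ be a perfect field and $L/\mathbf{k}$ a quadratic extension. (1) Let $p\in\mathcal{Q}^L$ be a point of degree $2$ whose geometric components are not on the same ruling of $\mathcal{Q}^L_{\overline{\mathbf{k}}}\simeq\mathbb{P}^1_{\overline{\mathbf{k}}}\times\mathbb{P}^1_{\overline{\mathbf{k}}}$ and whose splitting field is $L$. Then there exists $\alpha\in\operatorname{Aut}_{\mathbf{k}}(\mathcal{Q}^L)$ such that $\alpha(p)=\{([1:0],[0:1]),([0:1],[1:0])\}$. (2) Let $r,s\in\mathcal{Q}^L(\mathbf{k})$ be two rational points not contained in the same ruling of $\mathcal{Q}^L_{\overline{\mathbf{k}}}$. Then there exists $\alpha\in\operatorname{Aut}_{\mathbf{k}}(\mathcal{Q}^L)$ such that $\alpha(r)=([1:0],[1:0])$ and $\alpha(s)=([0:1],[0:1])$.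
   Context: With $g$ the generator of $\operatorname{Gal}(L/\mathbf{k})$, $\mathcal{Q}^L$ is the $\mathbf{k}$-structure on $\mathbb{P}^1_L\times\mathbb{P}^1_L$ given by the Galois action $([u_0:u_1],[v_0:v_1])\mapsto([v_0^g:v_1^g],[u_0^g:u_1^g])$; points are written in the coordinates of $\mathbb{P}^1_L\times\mathbb{P}^1_L$. A point of degree $d$ is a Galois orbit of cardinality $d$ of $\overline{\mathbf{k}}$-points, its geometric components being the points of the orbit; its splitting field is the smallest normal extension over which all of them are defined. ''Two points are on the same ruling'' means they lie on a common fibre of one of the two projections of $\mathbb{P}^1\times\mathbb{P}^1$. *)

(* Defs.v *)
From HB Require Import structures.
From mathcomp Require Import all_boot all_order all_algebra.
Set Implicit Arguments. Unset Strict Implicit. Unset Printing Implicit Defensive.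
Import Order.TTheory GRing.Theory Num.Theory.
Local Open Scope ring_scope.

(* L is a field, g a field automorphism of L of order
   exactly 2 (the generator of Gal(L/k)), k = fixed field of g.
   A point of P^1_L is a nonzero vector (u0,u1) in L^2, up to scaling.
   A point of P^1_L x P^1_L is a pair of such vectors. *)

Section QL.
Variable L : fieldType.

Definition vec2 := (L * L)%type.
Definition pt := (vec2 * vec2)%type.

Definition nz (u : vec2) : bool := (u.1 != 0) || (u.2 != 0).
Definition is_pt (x : pt) : bool := nz x.1 && nz x.2.

Definition peq (u v : vec2) : bool := u.1 * v.2 == u.2 * v.1.
Definition pteq (x y : pt) : bool := peq x.1 y.1 && peq x.2 y.2.

Variable g : L -> L.
Definition vconj (u : vec2) : vec2 := (g u.1, g u.2).
(* the twisted Galois action defining Q^L: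
   ([u0:u1],[v0:v1]) |-> ([v0^g:v1^g],[u0^g:u1^g]) *)
Definition sigma (x : pt) : pt := (vconj x.2, vconj x.1).

Definition e0 : vec2 := (1, 0).
Definition e1 : vec2 := (0, 1).

(* Automorphisms of P^1_L x P^1_L: (A,B) in GL2 x GL2, optionally composed
   with the swap of factors. *)
Record autPP := AutPP { aA : 'M[L]_2; aB : 'M[L]_2; aswap : bool }.

Definition mxapp (M : 'M[L]_2) (u : vec2) : vec2 :=
  (M ord0 ord0 * u.1 + M ord0 ord_max * u.2,
   M ord_max ord0 * u.1 + M ord_max ord_max * u.2).

Definition act (a : autPP) (x : pt) : pt :=
  if aswap a then (mxapp (aA a) x.2, mxapp (aB a) x.1)
  else (mxapp (aA a) x.1, mxapp (aB a) x.2).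

(* alpha is in Aut_k(Q^L): an automorphism of P^1_L x P^1_L commuting with the
   twisted Galois action sigma. *)
Definition is_kaut (a : autPP) : Prop :=
  \det (aA a) != 0 /\ \det (aB a) != 0 /\
  forall x : pt, is_pt x -> pteq (act a (sigma x)) (sigma (act a x)).

End QL.

Definition fixed_field_perfect (L : fieldType) (g : L -> L) : Prop :=
  forall p : nat, p \in [pchar L] ->
    forall a : L, g a = a -> exists b : L, g b = b /\ b ^+ p = a.

(* Main.v *)
Require Import Defs.
From HB Require Import structures.
From mathcomp Require Import all_boot all_order all_algebra.
From mathcomp Require Import ring.
Import GRing.Theory.
Local Open Scope ring_scope.
Set Implicit Arguments. Unset Strict Implicit.

Definition mk22 (L : fieldType) (a b c d : L) : 'M[L]_2 :=
  \matrix_(i < 2, j < 2) if i == ord0 then (if j == ord0 then a else b)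
                        else (if j == ord0 then c else d).

Lemma det_mk22 (L : fieldType) (a b c d : L) : \det (mk22 a b c d) = a * d - b * c.
Proof.
rewrite (expand_det_row _ ord0) !big_ord_recl big_ord0 /cofactor !det_mx11 !mxE /=.
rewrite /bump /= expr0 expr1 mul1r mulN1r addr0 mulrN //.
Qed.

Lemma kaut_mk (L : fieldType) (g : {rmorphism L -> L})
  (g_invol : forall z : L, g (g z) = z) (A : 'M[L]_2) :
  \det A != 0 -> is_kaut g (AutPP A (map_mx g A) false).
Proof.
move=> hA; split; first done; split; first by rewrite det_map_mx fmorph_eq0.
case=> [[u1 u2] [v1 v2]] _.
rewrite /pteq /peq /act /sigma /vconj /mxapp /= !mxE !rmorphD !rmorphM !g_invol.
by apply/andP; split; apply/eqP; ring.
Qed.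

Theorem lemma3p6 (L : fieldType) (g : {rmorphism L -> L})
  (g_invol : forall z : L, g (g z) = z)
  (g_nontriv : exists z : L, g z != z)
  (k_perfect : fixed_field_perfect g) :
  (* (1) degree 2 point {x, sigma x}, components not on a common ruling,
         splitting field L (components have coordinates in L, x <> sigma x) *)
  (forall x : pt L, is_pt x ->
     ~~ pteq (sigma g x) x ->
     ~~ peq x.1 (sigma g x).1 -> ~~ peq x.2 (sigma g x).2 ->
     exists a : autPP L, is_kaut g a /\
       ((pteq (act a x) (e0 L, e1 L) && pteq (act a (sigma g x)) (e1 L, e0 L))
        || (pteq (act a x) (e1 L, e0 L) && pteq (act a (sigma g x)) (e0 L, e1 L))))
  /\
  (* (2) two rational points not on a common ruling *)
  (forall r s : pt L, is_pt r -> is_pt s ->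
     pteq (sigma g r) r -> pteq (sigma g s) s ->
     ~~ peq r.1 s.1 -> ~~ peq r.2 s.2 ->
     exists a : autPP L, is_kaut g a /\
       pteq (act a r) (e0 L, e0 L) /\ pteq (act a s) (e1 L, e1 L)).
Proof.
split.
- case=> [[u1 u2] [v1 v2]] _ _; rewrite /peq /sigma /vconj /= => h _.
  set A := mk22 (g v2) (- g v1) (- u2) u1.
  exists (AutPP A (map_mx g A) false); split.
    apply: kaut_mk => //; rewrite det_mk22.
    rewrite subr_eq0; apply: contra h => /eqP h.
    by rewrite mulrNN in h; rewrite mulrC h mulrC.
  rewrite /pteq /peq /act /vconj /mxapp /e0 /e1 /A /mk22 /= !mxE /=.
  rewrite ?rmorphD ?rmorphM ?rmorphN ?g_invol.
  apply/orP; left.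
  by rewrite ?mulr0 ?mulr1; repeat (apply/andP; split); apply/eqP; ring.
- case=> [[u1 u2] [v1 v2]] [[w1 w2] [z1 z2]] _ _.
  rewrite /pteq /peq /sigma /vconj /= => /andP[_ /eqP hr] /andP[_ /eqP hs] h _.
  set A := mk22 w2 (- w1) (- u2) u1.
  exists (AutPP A (map_mx g A) false); split.
    apply: kaut_mk => //; rewrite det_mk22.
    rewrite subr_eq0; apply: contra h => /eqP h.
    by rewrite mulrNN in h; rewrite mulrC h mulrC.
  rewrite /pteq /peq /act /vconj /mxapp /e0 /e1 /A /mk22 /= !mxE /=.
  rewrite !rmorphN.
  rewrite ?mulr0 ?mulr1; split; apply/andP; split; apply/eqP.
  + ring.
  + rewrite mulNr hr; ring.
  + ring.
  + rewrite mulNr hs; ring.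
Qed.
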